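(* In a minimum Walrasian equilibrium of a market with unit-demand buyers, every item $j$ with strictly positive price $p_j>0$ has a buyer that supports it.
   Context: Buyer $i$ is unit demand if there are $v_{i,j}\ge0$ with $v_i(S)=\max_{j\in S}v_{i,j}$, $v_i(\emptyset)=0$; utility is quasi-linear. A Walrasian equilibrium is a price vector $p\ge0$ and an allocation $\mathrm{win}$ assigning every item $j$ to a buyer $\mathrm{win}(j)$ such that each buyer's bundle maximizes $v_i(T)-\sum_{j\in T}p_j$ over all bundles $T$. A minimum Walrasian equilibrium is one whose price vector is coordinatewise at most that of every Walrasian equilibrium. Buyer $i$ supports the price of item $j$ if $\mathrm{win}(j)\neq i$ and either (1) there is an item $k$ with $\mathrm{win}(k)=i$ and $v_{i,k}-p_k=v_{i,j}-p_j$, or (2) buyer $i$ receives no item and $v_{i,j}=p_j$. *)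

(* Defs.v *)
From mathcomp Require Import all_boot all_order all_algebra.
Set Implicit Arguments. Unset Strict Implicit. Unset Printing Implicit Defensive.
Import Order.TTheory GRing.Theory Num.Theory.
Local Open Scope ring_scope.

(* Market: finite set of buyers B, finite set of items I, values in a real field R.
   v i j = v_{i,j} >= 0. Unit-demand valuation: v_i(S) = max_{j in S} v_{i,j},
   v_i(emptyset) = 0 (since v >= 0 this is the max folded from 0). *)
Section Market.
Variables (R : realFieldType) (B I : finType) (v : B -> I -> R).

Definition unit_val (i : B) (S : {set I}) : R := \big[Num.max/0]_(j in S) v i j.

Definition utility (p : I -> R) (i : B) (T : {set I}) : R :=
  unit_val i T - \sum_(j in T) p j.

Definition bundle (win : I -> B) (i : B) : {set I} := [set j | win j == i].

Definition walrasian (p : I -> R) (win : I -> B) : Prop :=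
  (forall j, 0 <= p j) /\
  (forall i (T : {set I}), utility p i T <= utility p i (bundle win i)).

Definition min_walrasian (p : I -> R) (win : I -> B) : Prop :=
  walrasian p win /\
  (forall (p' : I -> R) (win' : I -> B), walrasian p' win' -> forall j, p j <= p' j).

Definition supports (p : I -> R) (win : I -> B) (i : B) (j : I) : Prop :=
  win j != i /\
  ((exists k, win k = i /\ v i k - p k = v i j - p j) \/
   ((forall k, win k != i) /\ v i j = p j)).
End Market.

(* Main.v *)
Require Import Defs.
From mathcomp Require Import all_boot all_order all_algebra.
From Stdlib Require Import Classical.
From mathcomp Require Import ring lra.
Import Order.TTheory GRing.Theory Num.Theory.
Local Open Scope ring_scope.

Section Help.
Variables (R : realFieldType) (B I : finType) (v : B -> I -> R).
Hypothesis v_ge0 : forall i j, 0 <= v i j.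

Lemma uv_attain i (S : {set I}) j : j \in S ->
  exists2 k, k \in S & unit_val v i S = v i k.
Proof.
move=> jS; rewrite /unit_val.
rewrite (bigmax_eq_arg _ _ _ _ jS); last by move=> k _; exact: v_ge0.
by case: (arg_maxP (fun k => v i k) jS) => k kS _; exists k.
Qed.

Lemma uv_ge i (S : {set I}) k : k \in S -> v i k <= unit_val v i S.
Proof. by move=> kS; rewrite /unit_val; apply: le_bigmax_cond. Qed.

Lemma uv_set1 i k : unit_val v i [set k] = v i k.
Proof. by rewrite /unit_val bigmax_set1 max_l. Qed.

Lemma uv_set0 i : unit_val v i set0 = 0.
Proof. by rewrite /unit_val big_set0. Qed.

Lemma ut_set1 (p : I -> R) i k : utility v p i [set k] = v i k - p k.
Proof. by rewrite /utility uv_set1 big_set1. Qed.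

Lemma sum_ge1 (p : I -> R) (T : {set I}) j : (forall k, 0 <= p k) ->
  j \in T -> p j <= \sum_(k in T) p k.
Proof.
move=> p0 jT; rewrite (bigD1 j) //= lerDl; exact: sumr_ge0.
Qed.

Lemma sum_ge2 (p : I -> R) (T : {set I}) j k : (forall k, 0 <= p k) ->
  j \in T -> k \in T -> k != j -> p k + p j <= \sum_(l in T) p l.
Proof.
move=> p0 jT kT kj; rewrite (bigD1 j) //= (bigD1 k) /=; last by rewrite kT.
rewrite addrA [p j + _]addrC lerDl; exact: sumr_ge0.
Qed.
End Help.

Theorem mainTheorem8 (R : realFieldType) (B I : finType) (v : B -> I -> R)
  (v_ge0 : forall i j, 0 <= v i j) (p : I -> R) (win : I -> B) :
  min_walrasian v p win ->
  forall j, 0 < p j -> exists i, supports v p win i j.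
Proof.
move=> [[p0 opt] pmin] j pj.
apply: NNPP => Hns.
set w := win j.
set U := fun (q : I -> R) i T => utility v q i T.
have Ub : forall i k, v i k - p k <= U p i (bundle win i).
  by move=> i k; rewrite /U -(@ut_set1 _ _ _ _ v_ge0); exact: opt.
have FA : forall i (T : {set I}), j \in T ->
    U p i T < U p i (bundle win i) \/ U p i T <= v i j - p j.
  move=> i T jT; have [k kT Ek] := @uv_attain _ _ _ _ v_ge0 i _ _ jT.
  rewrite /U /utility Ek.
  case: (eqVneq k j) => [->|kj].
    by right; rewrite lerD2l lerN2; exact: (@sum_ge1 _ _ _ _ _ p0).
  left; apply: (lt_le_trans _ (Ub i k)).
  rewrite ltrD2l ltrN2; apply: (lt_le_trans _ (@sum_ge2 _ _ _ _ _ _ p0 jT kT kj)).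
  by rewrite ltrDl.
have FB : forall i, i != w -> v i j - p j < U p i (bundle win i).
  move=> i iw; rewrite lt_neqAle Ub andbT; apply/negP => /eqP E.
  apply: Hns; exists i; split; first by rewrite eq_sym.
  case: (pickP (fun k => win k == i)) => [k0 /eqP k0i | none].
    left.
    have k0b : k0 \in bundle win i by rewrite inE k0i.
    have [k kb Ek] := @uv_attain _ _ _ _ v_ge0 i _ _ k0b.
    exists k; split; first by move: kb; rewrite inE => /eqP.
    apply/eqP; rewrite eq_le E Ub /= /U /utility Ek lerD2l lerN2.
    exact: (@sum_ge1 _ _ _ _ _ p0).
  right; split; first by move=> k; rewrite none.
  have Eb : bundle win i = set0.
    by apply/setP => k; rewrite inE in_set0 none.
  move: E; rewrite /U Eb /utility (@uv_set0 _ _ _ v) big_set0 subr0 => /eqP.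
  by rewrite subr_eq0 => /eqP.
have Gpos : forall x : B * {set I}, (x.1 != w) && (j \in x.2) ->
    0 < U p x.1 (bundle win x.1) - U p x.1 x.2.
  move=> [i T] /andP[/= iw jT]; rewrite subr_gt0.
  case: (FA i T jT) => // H; exact: (le_lt_trans H (FB i iw)).
set eps := \big[Order.min/p j]_(x : B * {set I} | (x.1 != w) && (j \in x.2))
   (U p x.1 (bundle win x.1) - U p x.1 x.2).
have eps0 : 0 < eps by apply: lt_bigmin => // x Hx; exact: Gpos.
have epsp : eps <= p j by apply: bigmin_le_id.
have epsG : forall i (T : {set I}), i != w -> j \in T ->
    eps <= U p i (bundle win i) - U p i T.
  move=> i T iw jT; apply: (bigmin_le_cond _ (P := fun x : B * {set I} => (x.1 != w) && (j \in x.2)) (j := (i, T))).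
  by rewrite /= iw jT.
set p' := fun k => if k == j then p j - eps else p k.
have Usum : forall i (T : {set I}), U p' i T = U p i T + (if j \in T then eps else 0).
  move=> i T; rewrite /U /utility.
  case: ifP => jT.
    rewrite (bigD1 j) //= [X in _ = _ - X + _](bigD1 j) //= /p' eqxx.
    rewrite (eq_bigr (fun k => p k)); last by move=> k /andP[_ /negbTE ->].
    by rewrite !opprD opprK; ring.
  rewrite addr0; congr (_ - _); apply: eq_bigr => k kT.
  rewrite /p'; case: eqP => // E; by rewrite E jT in kT.
have W' : walrasian v p' win.
  split.
    by move=> k; rewrite /p'; case: ifP => _ //; rewrite subr_ge0.
  move=> i T; have := Usum i T; have := Usum i (bundle win i).
  rewrite /U => -> ->.
  have jb : (j \in bundle win i) = (i == w) by rewrite inE eq_sym.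
  rewrite jb; case: eqVneq => [iw|iw].
    apply: lerD; first exact: opt.
    by case: ifP => _ //; rewrite ltW.
  rewrite addr0; case: ifP => jT; last by rewrite addr0; exact: opt.
  by rewrite -lerBrDl; apply: epsG.
have := pmin p' win W' j; rewrite /p' eqxx.
move=> H; lra.
Qed.
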